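(* Let $l_n,R_n>0$ ($n\in\mathbb N$) satisfy $l_n,R_n\to\infty$, $l_n^2/n\to0$, $n/R_n\to0$, $e^{-\pi l_n/2}R_n\to0$, and for real $t\neq\pm n$ let $W_n(t)=\lim_{\varepsilon\downarrow0}W_n(t+i\varepsilon)$, where $W_n(z)=\exp\!\big(-l_n\pi-il_n\log\frac{z-n}{z+n}\big)$, $z\in\mathbb C_+$. Then $$\sup_n\Big|\int_{|t|>n}W_n(t)\,\frac{dt}{t}\Big|<\infty,$$ where $\int_{|t|>n}$ means $\lim_{M\to\infty}\int_{n<|t|<M}$.
   Context: $\mathbb C_+=\{\operatorname{Im}z>0\}$; $\log$ denotes the branch with imaginary part in $(0,\pi)$ on $\mathbb C_+$. Explicitly, for $|t|>n$ the boundary values are $W_n(t)=e^{-l_n\pi-il_n\log|\frac{t-n}{t+n}|}$. *)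

(* Defs.v *)
From Stdlib Require Import Reals.
From Coquelicot Require Import Coquelicot.
Open Scope R_scope.

Definition cexp (z : C) : C :=
  RtoC (exp (Re z)) * (cos (Im z), sin (Im z)).

(* Boundary value of W_n on the real axis for |t| > n (cf. context):
   W_n(t) = exp(-l_n pi - i l_n log|(t-n)/(t+n)|). *)
Definition Wb (lam : R) (n : nat) (t : R) : C :=
  cexp (RtoC (- (lam * PI)) - (0, lam * ln (Rabs ((t - INR n) / (t + INR n))))%R).

Definition integrand (lam : R) (n : nat) (t : R) : C := Cdiv (Wb lam n t) (RtoC t).

Definition CRInt (f : R -> C) (a b : R) : C :=
  @RInt C_R_CompleteNormedModule f a b.
Definition ex_CRInt (f : R -> C) (a b : R) : Prop :=
  @ex_RInt C_R_CompleteNormedModule f a b.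

(* Main.v *)
Require Import Defs.
From Stdlib Require Import Reals Lra Lia.
From Coquelicot Require Import Coquelicot.
Open Scope R_scope.

Lemma adapted_ind (a b d K : R) : a < d < b ->
  adapted_couple (fun t => if Rle_dec t d then K else 0) a b
    (a :: d :: b :: nil) (K :: 0 :: nil).
Proof.
  intros [H1 H2]. unfold adapted_couple.
  rewrite Rmin_left by lra. rewrite Rmax_right by lra.
  repeat split; auto.
  - intros i Hi; simpl in Hi. destruct i as [|[|i]]; simpl; [lra|lra|lia].
  - intros i Hi; simpl in Hi. destruct i as [|[|i]]; simpl; intros x [Hx1 Hx2].
    + destruct (Rle_dec x d); lra.
    + destruct (Rle_dec x d); lra.
    + lia.
Qed.

Definition ind_step (a b d K : R) (H : a < d < b) :
  IsStepFun (fun t => if Rle_dec t d then K else 0) a b :=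
  existT _ (cons a (cons d (cons b nil))) (existT _ (cons K (cons 0 nil)) (adapted_ind a b d K H)).

Lemma ind_step_int a b d K H :
  RiemannInt_SF (mkStepFun (ind_step a b d K H)) = K * (d - a).
Proof.
  unfold RiemannInt_SF. destruct H as [H1 H2].
  destruct (Rle_dec a b); [|lra]. simpl. ring.
Qed.

Lemma Rmax_cont c x : continuity_pt (fun t => Rmax t c) x.
Proof.
  unfold continuity_pt, continue_in, limit1_in, limit_in.
  intros eps Heps. exists eps. split; auto.
  intros y [_ Hy]. simpl in *. unfold R_dist in *.
  unfold Rmax. destruct (Rle_dec y c); destruct (Rle_dec x c);
  unfold Rabs in *; repeat destruct Rcase_abs; lra.
Qed.

Lemma ex_RInt_bdd (f : R -> R) a b B : a < b ->
  (forall t, a < t <= b -> continuity_pt f t) ->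
  (forall t, a <= t <= b -> Rabs (f t) <= B) -> ex_RInt f a b.
Proof.
  intros Hab Hc Hb. apply ex_RInt_Reals_1. intro eps.
  assert (HB0 : 0 <= B) by (specialize (Hb a); assert (Rabs (f a) >= 0) by (apply Rle_ge, Rabs_pos); lra).
  set (d := Rmin ((b-a)/2) (eps/(4*(B+1)))).
  assert (Hd1 : 0 < d).
  { unfold d. apply Rmin_pos. lra. apply Rdiv_lt_0_compat. apply cond_pos. lra. }
  assert (Hd2 : d <= (b-a)/2) by apply Rmin_l.
  assert (Hd3 : d <= eps/(4*(B+1))) by apply Rmin_r.
  assert (Had : a < a + d < b) by lra.
  set (g := fun t => f (Rmax t (a+d))).
  assert (Hg : forall x, a <= x <= b -> continuity_pt g x).
  { intros x Hx. unfold g.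
    apply (continuity_pt_comp (fun t => Rmax t (a+d)) f x).
    apply Rmax_cont. apply Hc. unfold Rmax; destruct Rle_dec; lra. }
  assert (eps2 : 0 < eps/2) by (generalize (cond_pos eps); lra).
  destruct (continuity_implies_RiemannInt (Rlt_le _ _ Hab) Hg (mkposreal _ eps2))
    as [phi [psi [H1 H2]]].
  set (h := mkStepFun (ind_step a b (a+d) (2*B) Had)).
  exists phi. exists (mkStepFun (StepFun_P28 1 psi h)).
  split.
  - intros t Ht. simpl. rewrite Rmin_left in Ht by lra. rewrite Rmax_right in Ht by lra.
    specialize (H1 t). rewrite Rmin_left, Rmax_right in H1 by lra.
    specialize (H1 Ht).
    assert (Hfg : Rabs (f t - g t) <= (if Rle_dec t (a+d) then 2*B else 0)).
    { unfold g. destruct (Rle_dec t (a+d)).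
      - rewrite Rmax_right by lra.
        assert (A1 := Hb t Ht). assert (A2 := Hb (a+d) ltac:(lra)).
        unfold Rabs in *; repeat destruct Rcase_abs; lra.
      - rewrite Rmax_left by lra. replace (f t - f t) with 0 by ring.
        rewrite Rabs_R0; lra. }
    replace (f t - phi t) with ((f t - g t) + (g t - phi t)) by ring.
    eapply Rle_trans. apply Rabs_triang. unfold h; simpl. lra.
  - rewrite StepFun_P30. unfold h. rewrite ind_step_int.
    simpl in H2.
    assert (2*B*(a+d-a) < eps/2).
    { replace (a+d-a) with d by ring.
      apply Rle_lt_trans with (2*B*(eps/(4*(B+1)))).
      apply Rmult_le_compat_l; lra.
      unfold Rdiv. rewrite Rinv_mult. 
      assert (0 < /(B+1)) by (apply Rinv_0_lt_compat; lra).
      assert (B * / (B+1) < 1).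
      { apply Rmult_lt_reg_r with (B+1). lra. rewrite Rmult_assoc, Rinv_l by lra. lra. }
      generalize (cond_pos eps); intro. nra. }
    assert (0 <= 2*B*(a+d-a)) by nra.
    unfold Rabs in *; repeat destruct Rcase_abs; lra.
Qed.
Lemma sin_le_id x : 0 <= x -> sin x <= x.
Proof.
  intros H. destruct (Req_dec x 0) as [->|Hx]. rewrite sin_0; lra.
  destruct (MVT_cor2 (fun t => t - sin t) (fun t => 1 - cos t) 0 x ltac:(lra)) as [c [Hc _]].
  - intros c _. apply derivable_pt_lim_minus. apply derivable_pt_lim_id. apply derivable_pt_lim_sin.
  - rewrite sin_0 in Hc. assert (cos c <= 1) by apply COS_bound. nra.
Qed.
Lemma abs_sin_le x : Rabs (sin x) <= Rabs x.
Proof.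
  assert (forall y, 0 <= y -> Rabs (sin y) <= y).
  { intros y Hy. destruct (Rle_dec y 1).
    - assert (HP := PI2_1). assert (0 <= sin y) by (apply sin_ge_0; lra).
      rewrite Rabs_pos_eq by lra. apply sin_le_id; lra.
    - assert (HS := SIN_bound y). unfold Rabs; destruct Rcase_abs; lra. }
  destruct (Rle_dec 0 x).
  - rewrite (Rabs_pos_eq x) by lra. auto.
  - replace x with (- - x) by ring. rewrite sin_neg, Rabs_Ropp, Rabs_Ropp. rewrite (Rabs_pos_eq (-x)) by lra. apply H; lra.
Qed.

Definition U (lam N t : R) := exp (-(lam*PI)) * cos (lam * ln ((t-N)/(t+N))) / t.
Definition V (lam N t : R) := - (exp (-(lam*PI)) * sin (lam * ln ((t-N)/(t+N)))) / t.

Lemma integrand_eq lam n t : 0 < INR n -> INR n < Rabs t ->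
  integrand lam n t = (U lam (INR n) t, V lam (INR n) t).
Proof.
  intros HN Ht. set (N := INR n) in *.
  assert (Hpos : 0 < (t - N)/(t+N) /\ t <> 0).
  { unfold Rabs in Ht; destruct Rcase_abs.
    - split; [|lra]. replace ((t-N)/(t+N)) with ((N-t)/(-(t+N))) by (field; lra).
      apply Rdiv_lt_0_compat; lra.
    - split; [|lra]. apply Rdiv_lt_0_compat; lra. }
  destruct Hpos as [Hp Ht0].
  unfold integrand, Wb, cexp, U, V. fold N.
  rewrite (Rabs_pos_eq _ (Rlt_le _ _ Hp)).
  set (L := ln ((t-N)/(t+N))).
  unfold Cdiv, Cmult, Cinv, Cminus, Cplus, Copp, RtoC. simpl.
  replace (0 + - (lam * L)) with (- (lam * L)) by ring.
  replace (- (lam * PI) + - 0) with (- (lam * PI)) by ring.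
  rewrite cos_neg, sin_neg.
  apply injective_projections; simpl; field; lra.
Qed.

Lemma ballR (x y e : R) : ball x e y <-> Rabs (y - x) < e.
Proof. unfold ball; simpl. unfold AbsRing_ball, abs, minus, plus, opp; simpl. tauto. Qed.

Section S.
Variables lam N : R.
Hypothesis Hlam : 0 < lam.
Hypothesis HN : 0 < N.
Let c := exp (-(lam*PI)).

Lemma L_odd s : N < s -> ln ((-s - N)/(-s + N)) = - ln ((s-N)/(s+N)).
Proof.
  intros Hs. replace ((-s - N)/(-s + N)) with (/ ((s-N)/(s+N))) by (field; lra).
  apply ln_Rinv. apply Rdiv_lt_0_compat; lra.
Qed.

Lemma U_odd s : N < s -> U lam N (-s) = - U lam N s.
Proof. intros Hs. unfold U. rewrite L_odd by lra.
  replace (lam * - ln ((s - N) / (s + N))) with (- (lam * ln ((s - N) / (s + N)))) by ring.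
  rewrite cos_neg. field. lra. Qed.

Lemma V_even s : N < s -> V lam N (-s) = V lam N s.
Proof. intros Hs. unfold V. rewrite L_odd by lra.
  replace (lam * - ln ((s - N) / (s + N))) with (- (lam * ln ((s - N) / (s + N)))) by ring.
  rewrite sin_neg. field. lra. Qed.

Lemma pos_ratio t : N < Rabs t -> 0 < (t-N)/(t+N).
Proof.
  intros Ht. unfold Rabs in Ht; destruct Rcase_abs.
  - replace ((t-N)/(t+N)) with ((N-t)/(-(t+N))) by (field; lra).
    apply Rdiv_lt_0_compat; lra.
  - apply Rdiv_lt_0_compat; lra.
Qed.

Lemma U_cont t : N < Rabs t -> continuity_pt (U lam N) t.
Proof.
  intros Ht. assert (Hp := pos_ratio t Ht).
  assert (t + N <> 0) by (unfold Rabs in Ht; destruct Rcase_abs; lra).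
  assert (t <> 0) by (unfold Rabs in Ht; destruct Rcase_abs; lra).
  apply continuity_pt_filterlim. apply (ex_derive_continuous (K := R_AbsRing) (V := R_NormedModule)).
  unfold U. auto_derive. repeat split; auto.
Qed.

Lemma V_cont t : N < Rabs t -> continuity_pt (V lam N) t.
Proof.
  intros Ht. assert (Hp := pos_ratio t Ht).
  assert (t + N <> 0) by (unfold Rabs in Ht; destruct Rcase_abs; lra).
  assert (t <> 0) by (unfold Rabs in Ht; destruct Rcase_abs; lra).
  apply continuity_pt_filterlim. apply (ex_derive_continuous (K := R_AbsRing) (V := R_NormedModule)).
  unfold V. auto_derive. repeat split; auto.
Qed.

Lemma c_pos : 0 < c.
Proof. apply exp_pos. Qed.

Lemma abs_frac y s : 0 < s -> Rabs (c * y / s) = c * Rabs y / s.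
Proof.
  intros Hs. assert (Hc := c_pos). unfold Rdiv. rewrite !Rabs_mult.
  rewrite (Rabs_pos_eq c) by lra. rewrite (Rabs_pos_eq (/ s)). ring.
  apply Rlt_le, Rinv_0_lt_compat; auto.
Qed.

Lemma cy_le y s : 0 < s -> N <= s -> Rabs y <= 1 -> c * Rabs y / s <= c / N.
Proof.
  intros Hs HNs Hy. assert (Hc := c_pos).
  unfold Rdiv. assert (0 < / s) by (apply Rinv_0_lt_compat; auto).
  assert (/ s <= / N) by (apply Rinv_le_contravar; auto).
  assert (0 <= Rabs y) by apply Rabs_pos.
  assert (c * Rabs y <= c) by nra.
  assert (0 <= c * Rabs y) by nra. nra.
Qed.

Lemma U_bound t : N <= t -> Rabs (U lam N t) <= c / N.
Proof.
  intros Ht. unfold U. fold c. rewrite abs_frac by lra. apply cy_le; try lra.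
  assert (H := COS_bound (lam * ln ((t - N) / (t + N)))). unfold Rabs; destruct Rcase_abs; lra.
Qed.

Lemma V_bound t : N <= t -> Rabs (V lam N t) <= c / N.
Proof.
  intros Ht. replace (V lam N t) with (- (c * sin (lam * ln ((t - N) / (t + N))) / t)) by (unfold V; fold c; field; lra).
  rewrite Rabs_Ropp.
  rewrite abs_frac by lra. apply cy_le; try lra.
  assert (H := SIN_bound (lam * ln ((t - N) / (t + N)))). unfold Rabs; destruct Rcase_abs; lra.
Qed.

Lemma ln_le_sub1 y : 0 < y -> ln y <= y - 1.
Proof. intros Hy. assert (H := exp_ineq1_le (ln y)). rewrite exp_ln in H by auto. lra. Qed.

Lemma V_tail s : 2*N <= s -> Rabs (V lam N s) <= 4*c*lam*N/(s*s).
Proof.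
  intros Hs. assert (Hc := c_pos).
  replace (V lam N s) with (- (c * sin (lam * ln ((s - N) / (s + N))) / s)) by (unfold V; fold c; field; lra).
  rewrite Rabs_Ropp.
  rewrite abs_frac by lra.
  set (y := (s+N)/(s-N)).
  assert (Hy1 : 1 <= y) by (unfold y; apply Rcomplements.Rle_div_r; lra).
  assert (HL : ln ((s-N)/(s+N)) = - ln y).
  { unfold y. rewrite <- ln_Rinv. f_equal. field. lra. apply Rdiv_lt_0_compat; lra. }
  assert (Hl0 : 0 <= ln y) by (rewrite <- ln_1; apply ln_le; lra).
  assert (Hl1 : ln y <= 4 * N / s).
  { eapply Rle_trans. apply ln_le_sub1. lra. unfold y.
    apply Rminus_le_0.  replace (4 * N / s - ((s + N) / (s - N) - 1)) with (2*N*(s - 2*N)/(s*(s-N))) by (field; lra).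
    apply Rmult_le_pos. nra. apply Rlt_le, Rinv_0_lt_compat. nra. }
  assert (HS := abs_sin_le (lam * ln ((s - N) / (s + N)))).
  rewrite HL. rewrite HL in HS. replace (lam * - ln y) with (- (lam * ln y)) in * by ring.
  rewrite Rabs_Ropp, (Rabs_pos_eq (lam * ln y)) in HS by nra.
  replace (4 * c * lam * N / (s * s)) with (c * (lam * (4 * N / s)) / s) by (field; lra).
  unfold Rdiv. apply Rmult_le_compat_r. apply Rlt_le, Rinv_0_lt_compat; lra.
  apply Rmult_le_compat_l; [lra|]. eapply Rle_trans; [exact HS|]. apply Rmult_le_compat_l; lra.
Qed.

Lemma UV_ex M : N < M -> ex_RInt (U lam N) N M /\ ex_RInt (V lam N) N M.
Proof.
  intros HM. split.
  - apply (ex_RInt_bdd _ _ _ (c/N)); auto.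
    intros t Ht. apply U_cont. rewrite Rabs_pos_eq; lra.
    intros t Ht. apply U_bound; lra.
  - apply (ex_RInt_bdd _ _ _ (c/N)); auto.
    intros t Ht. apply V_cont. rewrite Rabs_pos_eq; lra.
    intros t Ht. apply V_bound; lra.
Qed.

Lemma V_ex_far a b : N < a -> a <= b -> ex_RInt (V lam N) a b.
Proof.
  intros Ha Hab. apply (ex_RInt_Chasles_2 (V := R_CompleteNormedModule) _ N). lra. apply UV_ex. lra.
Qed.

Lemma V_tail_int M1 M2 : 2*N <= M1 -> M1 <= M2 ->
  Rabs (RInt (V lam N) M1 M2) <= 4*c*lam*N/M1.
Proof.
  intros H1 H2. assert (Hc := c_pos).
  set (K := 4*c*lam*N).
  assert (HK : 0 <= K) by (unfold K; assert (0 < c*lam) by nra; assert (0 < c*lam*N) by nra; lra).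
  set (phi := fun s => K/(s*s)).
  set (Phi := fun s => - (K / s)).
  assert (Hphi : is_RInt phi M1 M2 (minus (Phi M2) (Phi M1))).
  { apply (is_RInt_derive (V := R_CompleteNormedModule)).
    - intros x Hx. rewrite Rmin_left, Rmax_right in Hx by lra.
      unfold Phi, phi. auto_derive. lra. field. lra.
    - intros x Hx. rewrite Rmin_left, Rmax_right in Hx by lra.
      apply (ex_derive_continuous (K := R_AbsRing) (V := R_NormedModule)).
      unfold phi. auto_derive. nra. }
  assert (Hex := V_ex_far M1 M2 ltac:(lra) H2).
  assert (Hle1 : RInt (V lam N) M1 M2 <= RInt phi M1 M2).
  { apply RInt_le; auto. exists (minus (Phi M2) (Phi M1)); auto.
    intros x Hx. assert (T := V_tail x ltac:(lra)). unfold phi, K.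
    unfold Rabs in T; destruct Rcase_abs in T; lra. }
  assert (Hle2 : RInt (fun y => opp (phi y)) M1 M2 <= RInt (V lam N) M1 M2).
  { apply RInt_le; auto. exists (opp (minus (Phi M2) (Phi M1))). apply (is_RInt_opp (V := R_NormedModule)); auto.
    intros x Hx. assert (T := V_tail x ltac:(lra)). unfold phi, K. change (opp (4 * c * lam * N / (x * x))) with (- (4 * c * lam * N / (x * x))).
    unfold Rabs in T; destruct Rcase_abs in T; lra. }
  rewrite (is_RInt_unique _ _ _ _ Hphi) in Hle1.
  assert (E : RInt (fun y => opp (phi y)) M1 M2 = opp (minus (Phi M2) (Phi M1))).
  { apply is_RInt_unique. apply (is_RInt_opp (V := R_NormedModule)). exact Hphi. }
  rewrite E in Hle2.
  change (minus (Phi M2) (Phi M1)) with (Phi M2 - Phi M1) in *.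
  change (opp (Phi M2 - Phi M1)) with (- (Phi M2 - Phi M1)) in *.
  unfold Phi in *.
  assert (0 <= K / M2) by (apply Rmult_le_pos; auto; apply Rlt_le, Rinv_0_lt_compat; lra).
  assert (K/M2 <= K/M1) by (apply Rmult_le_compat_l; auto; apply Rinv_le_contravar; lra).
  fold K. unfold Rabs; destruct Rcase_abs; lra.
Qed.

Lemma G_diff M1 M2 : 2*N <= M1 -> M1 <= M2 ->
  Rabs (RInt (V lam N) N M2 - RInt (V lam N) N M1) <= 4*c*lam*N/M1.
Proof.
  intros H1 H2.
  assert (Ch : RInt (V lam N) N M1 + RInt (V lam N) M1 M2 = RInt (V lam N) N M2).
  { apply (RInt_Chasles (V := R_CompleteNormedModule)). apply UV_ex; lra. apply V_ex_far; lra. }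
  replace (RInt (V lam N) N M2 - RInt (V lam N) N M1) with (RInt (V lam N) M1 M2) by lra.
  apply V_tail_int; auto.
Qed.

Lemma G_first : Rabs (RInt (V lam N) N (2*N)) <= c.
Proof.
  assert (Hex : ex_RInt (V lam N) N (2*N)) by (apply UV_ex; lra).
  assert (E : (RInt (fun _ => c/N) N (2*N) : R) = c).
  { rewrite RInt_const. change (scal (2*N - N) (c/N)) with ((2*N-N)*(c/N)). field. lra. }
  assert (E' : (RInt (fun _ => -(c/N)) N (2*N) : R) = -c).
  { rewrite RInt_const. change (scal (2*N - N) (-(c/N))) with ((2*N-N)*(-(c/N))). field. lra. }
  assert (A1 : RInt (V lam N) N (2*N) <= RInt (fun _ => c/N) N (2*N)).
  { apply RInt_le; auto. lra. apply ex_RInt_const.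
    intros x Hx. assert (T := V_bound x ltac:(lra)). unfold Rabs in T; destruct Rcase_abs in T; lra. }
  assert (A2 : RInt (fun _ => -(c/N)) N (2*N) <= RInt (V lam N) N (2*N)).
  { apply RInt_le; auto. lra. apply ex_RInt_const.
    intros x Hx. assert (T := V_bound x ltac:(lra)). unfold Rabs in T; destruct Rcase_abs in T; lra. }
  rewrite E in A1. rewrite E' in A2. unfold Rabs; destruct Rcase_abs; lra.
Qed.

Lemma V_lim : exists J, filterlim (fun M => RInt (V lam N) N M) (Rbar_locally p_infty) (locally J)
  /\ Rabs J <= c*(1+2*lam).
Proof.
  assert (Hc := c_pos).
  set (G := fun M => RInt (V lam N) N M).
  set (K := 4*c*lam*N).
  assert (HK : 0 <= K) by (unfold K; assert (0 < c*lam) by nra; assert (0 < c*lam*N) by nra; lra).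
  set (F := filtermap G (Rbar_locally p_infty)).
  assert (PF : ProperFilter F) by (apply filtermap_proper_filter; apply Rbar_locally_filter).
  assert (CF : cauchy F).
  { intros eps. set (M0 := Rmax (2*N) (K/eps + 1)).
    assert (HM0a : 2*N <= M0) by apply Rmax_l.
    assert (HM0b : K/eps + 1 <= M0) by apply Rmax_r.
    exists (G M0). unfold F, filtermap. simpl. exists M0. intros x Hx.
    apply ballR. unfold G. eapply Rle_lt_trans. apply G_diff; lra.
    fold K. assert (He := cond_pos eps).
    apply Rmult_lt_reg_r with M0. lra. unfold Rdiv. rewrite Rmult_assoc, Rinv_l, Rmult_1_r by lra.
    assert (K <= eps * (K/eps)) by (right; field; lra). nra. }
  exists (lim (T := R_CompleteSpace) F).
  assert (HL := complete_cauchy (T := R_CompleteSpace) F PF CF).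
  set (J := lim (T := R_CompleteSpace) F) in *.
  split.
  - apply filterlim_locally. intros eps. exact (HL eps).
  - assert (HB : forall M, 2*N <= M -> Rabs (G M) <= c*(1+2*lam)).
    { intros M HM. unfold G.
      replace (RInt (V lam N) N M) with (RInt (V lam N) N (2*N) + (RInt (V lam N) N M - RInt (V lam N) N (2*N))) by ring.
      eapply Rle_trans. apply Rabs_triang.
      assert (A := G_first). assert (B := G_diff (2*N) M ltac:(lra) HM).
      replace (4 * c * lam * N / (2 * N)) with (2*c*lam) in B by (field; lra). nra. }
    destruct (Rle_dec (Rabs J) (c*(1+2*lam))) as [h|h]; auto. exfalso.
    assert (He : 0 < Rabs J - c*(1+2*lam)) by lra.
    destruct (HL (mkposreal _ He)) as [M1 HM1].
    set (x := Rmax M1 (2*N) + 1).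
    assert (Hx1 : M1 < x) by (unfold x; generalize (Rmax_l M1 (2*N)); lra).
    assert (Hx2 : 2*N <= x) by (unfold x; generalize (Rmax_r M1 (2*N)); lra).
    specialize (HM1 x Hx1). assert (HM1b : Rabs (G x - J) < Rabs J - c*(1+2*lam)) by (apply ballR; exact HM1).
    specialize (HB x Hx2).
    assert (Rabs J <= Rabs (G x) + Rabs (G x - J)).
    { replace J with (G x - (G x - J)) at 1 by ring. 
      eapply Rle_trans. apply Rabs_triang. rewrite Rabs_Ropp. lra. }
    lra.
Qed.
End S.

Lemma refl_int (W : R -> R) a b (s : R) : a < b ->
  (forall x, a < x < b -> W (-x) = s * W x) -> ex_RInt W a b ->
  is_RInt W (-b) (-a) (s * RInt W a b).
Proof.
  intros Hab Hs Hex.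
  assert (H1 := is_RInt_scal (V := R_NormedModule) _ _ _ s _ (RInt_correct (V := R_CompleteNormedModule) _ _ _ Hex)).
  assert (H2 := is_RInt_opp (V := R_NormedModule) _ _ _ _ H1).
  assert (H3 := is_RInt_swap (V := R_NormedModule) _ b a _ H2).
  rewrite opp_opp in H3.
  assert (H4 : is_RInt (V := R_NormedModule) (fun y => opp (W (- y))) b a (s * RInt W a b)).
  { eapply (is_RInt_ext (V := R_NormedModule)); [|exact H3].
    - intros x Hx. rewrite Rmin_right, Rmax_left in Hx by lra.
      rewrite Hs by lra. reflexivity.
  }
  assert (H5 := is_RInt_comp_opp (V := R_NormedModule) (fun y => opp (W (- y))) (-b) (-a) _ ltac:(rewrite !Ropp_involutive; exact H4)).
  eapply (is_RInt_ext (V := R_NormedModule)); [|exact H5].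
  intros x _. simpl. change (- - W (- - x) = W x). rewrite !Ropp_involutive. reflexivity.
Qed.

Lemma CRInt_pair (f : R -> C) (a b : R) :
  ex_RInt (fun t => fst (f t)) a b -> ex_RInt (fun t => snd (f t)) a b ->
  ex_CRInt f a b /\ CRInt f a b = (RInt (fun t => fst (f t)) a b, RInt (fun t => snd (f t)) a b).
Proof.
  intros [l1 H1] [l2 H2].
  assert (H : @is_RInt C_R_CompleteNormedModule f a b (l1, l2)).
  { apply (is_RInt_fct_extend_pair (U := R_NormedModule) (V := R_NormedModule)); auto. }
  split. exists (l1,l2). exact H.
  unfold CRInt. rewrite (is_RInt_unique _ _ _ _ H).
  rewrite (is_RInt_unique _ _ _ _ H1), (is_RInt_unique _ _ _ _ H2). reflexivity.
Qed.

Lemma ball_C (x y : C) (e : R) : ball (x : C_UniformSpace) e y <-> ball (fst x) e (fst y) /\ ball (snd x) e (snd y).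
Proof. destruct x, y. simpl. unfold ball; simpl. unfold prod_ball. simpl. tauto. Qed.

Theorem lemma6 (l Rn : nat -> R)
  (hpos : forall n : nat, (0 < n)%nat -> 0 < l n /\ 0 < Rn n)
  (hl : is_lim_seq l p_infty)
  (hR : is_lim_seq Rn p_infty)
  (hl2 : is_lim_seq (fun n => (l n) ^ 2 / INR n) 0)
  (hnR : is_lim_seq (fun n => INR n / Rn n) 0)
  (hexp : is_lim_seq (fun n => exp (- (PI * l n) / 2) * Rn n) 0) :
  exists K : R, forall n : nat, (0 < n)%nat ->
    (forall M : R, INR n < M ->
        ex_CRInt (integrand (l n) n) (INR n) M /\
        ex_CRInt (integrand (l n) n) (- M) (- INR n)) /\
    exists I : C,
      filterlim (fun M : R => Cplus (CRInt (integrand (l n) n) (- M) (- INR n))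
                                   (CRInt (integrand (l n) n) (INR n) M))
                (Rbar_locally p_infty) (locally I)
      /\ Cmod I <= K.
Proof.
  exists 4. intros n Hn. destruct (hpos n Hn) as [Hl _].
  assert (HN : 0 < INR n) by (apply lt_0_INR; lia).
  set (N := INR n) in *. set (lam := l n) in *.
  set (f := integrand lam n).
  assert (Hf : forall t, N < Rabs t -> f t = (U lam N t, V lam N t)) by (intros; apply integrand_eq; auto).
  assert (Hpos : forall M, N < M ->
    (ex_CRInt f N M /\ CRInt f N M = (RInt (U lam N) N M, RInt (V lam N) N M)) /\
    (ex_CRInt f (-M) (-N) /\ CRInt f (-M) (-N) = (- RInt (U lam N) N M, RInt (V lam N) N M))).
  { intros M HM. destruct (UV_ex lam N HN M HM) as [EU EV]. split.
    - destruct (CRInt_pair f N M) as [P1 P2].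
      + eapply ex_RInt_ext; [|exact EU]. intros x Hx. rewrite Rmin_left, Rmax_right in Hx by lra.
        rewrite Hf; auto. rewrite Rabs_pos_eq; lra.
      + eapply ex_RInt_ext; [|exact EV]. intros x Hx. rewrite Rmin_left, Rmax_right in Hx by lra.
        rewrite Hf; auto. rewrite Rabs_pos_eq; lra.
      + split; auto. rewrite P2. f_equal; apply RInt_ext; intros x Hx; rewrite Rmin_left, Rmax_right in Hx by lra;
        rewrite Hf; auto; rewrite Rabs_pos_eq; lra.
    - assert (RU := refl_int (U lam N) N M (-1) HM ltac:(intros; rewrite U_odd by (auto; lra); ring) EU).
      assert (RV := refl_int (V lam N) N M 1 HM ltac:(intros; rewrite V_even by (auto; lra); ring) EV).
      assert (Hext : forall x, Rmin (-M) (-N) < x < Rmax (-M) (-N) -> f x = (U lam N x, V lam N x)).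
      { intros x Hx. rewrite Rmin_left, Rmax_right in Hx by lra. apply Hf.
        rewrite Rabs_left; lra. }
      destruct (CRInt_pair f (-M) (-N)) as [P1 P2].
      + eapply ex_RInt_ext; [|exists (-1 * RInt (U lam N) N M); exact RU].
        intros x Hx. rewrite Hext; auto.
      + eapply ex_RInt_ext; [|exists (1 * RInt (V lam N) N M); exact RV].
        intros x Hx. rewrite Hext; auto.
      + split; auto. rewrite P2. f_equal.
        * rewrite (RInt_ext _ (U lam N)). rewrite (is_RInt_unique _ _ _ _ RU). replace (-1 * RInt (U lam N) N M) with (- RInt (U lam N) N M) by ring. reflexivity.
          intros x Hx. rewrite Hext; auto.
        * rewrite (RInt_ext _ (V lam N)). rewrite (is_RInt_unique _ _ _ _ RV). apply Rmult_1_l.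
          intros x Hx. rewrite Hext; auto. }
  split.
  { intros M HM. destruct (Hpos M HM) as [[A _] [B _]]. auto. }
  destruct (V_lim lam N Hl HN) as [J [HJ HJb]].
  exists (0, 2*J). split.
  - apply filterlim_locally. intros eps.
    assert (He2 : 0 < eps/2) by (generalize (cond_pos eps); lra).
    destruct (proj1 (filterlim_locally (F := Rbar_locally p_infty) (fun M : R => RInt (V lam N) N M) J) HJ (mkposreal _ He2)) as [M1 HM1].
    exists (Rmax M1 N). intros x Hx.
    assert (Hx1 : M1 < x) by (generalize (Rmax_l M1 N); lra).
    assert (Hx2 : N < x) by (generalize (Rmax_r M1 N); lra).
    specialize (HM1 x Hx1). assert (HM1b : Rabs (RInt (V lam N) N x - J) < eps/2) by (apply ballR; exact HM1).
    destruct (Hpos x Hx2) as [[_ E1] [_ E2]]. fold f. rewrite E1, E2.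
    apply ball_C. simpl. split; apply ballR.
    + replace (- RInt (U lam N) N x + RInt (U lam N) N x - 0) with 0 by ring.
      rewrite Rabs_R0. apply cond_pos.
    + replace (RInt (V lam N) N x + RInt (V lam N) N x - 2 * J) with (2 * (RInt (V lam N) N x - J)) by ring.
      rewrite Rabs_mult, Rabs_pos_eq by lra. lra.
  - assert (Hc : exp (- (lam * PI)) * (1 + 2 * lam) <= 1).
    { assert (H1 := exp_ineq1_le (2*lam)).
      assert (H2 : exp (- (lam * PI)) * exp (2*lam) <= 1).
      { rewrite <- exp_plus. rewrite <- exp_0. assert (HP := PI2_1).
        destruct (Req_dec (- (lam * PI) + 2 * lam) 0) as [E|E]. rewrite E; lra.
        left. apply exp_increasing. nra. }
      assert (0 < exp (- (lam * PI))) by apply exp_pos. nra. }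
    eapply Rle_trans. apply Cmod_2Rmax. simpl.
    rewrite Rabs_R0. rewrite Rmax_right by apply Rabs_pos.
    rewrite Rabs_mult, (Rabs_pos_eq 2) by lra.
    assert (S2 : sqrt 2 <= 2).
    { rewrite <- (sqrt_square 2) at 2 by lra. apply sqrt_le_1_alt. lra. }
    assert (0 <= sqrt 2) by apply sqrt_pos.
    assert (0 <= Rabs J) by apply Rabs_pos. nra.
Qed.
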